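(* Let $d\ge2$, $n\ge1$, $d\le t\le dn$, let $\gamma$ be a positive conductivity on the lattice graph below, fix $p\in L_t$, and let $M_p=\mathcal N(p)\cap(J_{t-1}^{\mathcal S}\cup L_{t-1}^{\mathcal S})$. Suppose $\mathbf u\in\mathbb R^{L_t^{\mathcal S}\cup J_{t-1}^{\mathcal S}}$ satisfies $\mathbf u_p=0$, $\sum_{q\in\mathcal N(r)}\gamma_{rq}(\mathbf u_q-\mathbf u_r)=0$ for all $r\in L_{t-1}^{\mathcal S}\setminus M_p$, $\mathbf u=0$ on $J_{t-1}^{\mathcal S}$, and $\gamma_{bq_b}(\mathbf u_{q_b}-\mathbf u_b)=0$ for all $b\in J_{t-1}^{\mathcal S}$. Then $\mathbf u=0$.
   Context: Lattice: $D=\{x\in\mathbb Z^d:1\le x_i\le n\ \forall i\}$, $\partial D=\{p\in\mathbb Z^d:\min_{q\in D}\|q-p\|_{\ell^1}=1\}$; $E$ = unordered pairs $pq\subseteq D\cup\partial D$ with $\|p-q\|_{\ell^1}=1$, not both in $\partial D$; $\mathcal N(p)=\{q:pq\in E\}$; each $b\in\partial D$ has a unique neighbour $q_b\in D$. Conductivity $\gamma:E\to(0,\infty)$, symmetric. With $s(x)=\sum_ix_i$: $L_t=\{x\in D:s(x)=t\}$, $L_t^{\mathcal S}=\{x\in D:s(x)\le t\}$, $K_t^+=\{x\in\partial D:s(x)=t,\max_ix_i=n+1\}$, $K_t^-=\{x\in\partial D:s(x)=t,\min_ix_i=0\}$, $K_t^{\mathcal S\pm}=\bigcup_{\ell\le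 t}K_\ell^\pm$, $J_t^{\mathcal S}=K_t^{\mathcal S-}\cup K_{t+1}^{\mathcal S+}$. *)

(* Defs.v *)
From HB Require Import structures.
From mathcomp Require Import all_boot all_order all_algebra.
Set Implicit Arguments. Unset Strict Implicit. Unset Printing Implicit Defensive.
Import Order.TTheory GRing.Theory Num.Theory.

(* Lattice points of the box {0,...,n+1}^d, which contains D ∪ ∂D
   (all points relevant to the statement).  Coordinates are read as nats. *)
Definition pt (n d : nat) := {ffun 'I_d -> 'I_n.+2}.

Section Lattice.
Context {n d : nat}.
Implicit Types x y q : pt n d.

Definition l1 x y : nat := \sum_(i < d) ((x i - y i) + (y i - x i))%N.

Definition s x : nat := \sum_(i < d) (x i : nat).

Definition inD x : bool := [forall i, (1 <= x i <= n)%N].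

Definition inBD x : bool :=
  [exists q, inD q && (l1 q x == 1%N)] && [forall q, inD q ==> (1 <= l1 q x)%N].

(* E : pairs at l^1-distance 1 in D ∪ ∂D, not both in ∂D; N(x) = {q : xq ∈ E} *)
Definition edge x y : bool :=
  [&& l1 x y == 1%N, inD x || inBD x, inD y || inBD y & ~~ (inBD x && inBD y)].

Definition L (t : nat) x : bool := inD x && (s x == t).
Definition LS (t : nat) x : bool := inD x && (s x <= t)%N.
Definition Kp (t : nat) x : bool :=
  [&& inBD x, s x == t & \max_(i < d) (x i : nat) == n.+1].
Definition Km (t : nat) x : bool :=
  [&& inBD x, s x == t & \big[minn/n.+1]_(i < d) (x i : nat) == 0%N].
(* K^{S±}_t = ⋃_{l <= t} K^±_l *)
Definition KSp (t : nat) x : bool := Kp (s x) x && (s x <= t)%N.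
Definition KSm (t : nat) x : bool := Km (s x) x && (s x <= t)%N.
Definition JS (t : nat) x : bool := KSm t x || KSp t.+1 x.

Definition Mp (t : nat) (p : pt n d) x : bool := edge p x && (JS t.-1 x || LS t.-1 x).
End Lattice.

(* Main.v *)
Require Import Defs.
From HB Require Import structures.
From mathcomp Require Import all_boot all_order all_algebra.
From mathcomp Require Import zify.
Import Order.TTheory GRing.Theory Num.Theory.

Section Aux.
Context {n d : nat}.
Implicit Types x y z q : pt n d.

Lemma l1_one {x y} : l1 x y = 1%N ->
  exists i, ((y i : nat) = (x i).+1 \/ (x i : nat) = (y i).+1) /\
            forall j, j != i -> y j = x j.
Proof.
rewrite /l1 => H.
have [i Hi] : exists i, (0 < (x i - y i) + (y i - x i))%N.
  apply/existsP; apply: contraT; rewrite negb_exists => /forallP H0.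
  move: H; rewrite big1 // => j _.
  by move: (H0 j); rewrite -leqNgt leqn0 => /eqP.
move: H; rewrite (bigD1 i) //=; set S := (X in (_ + X)%N) => H.
have /eqP : S = 0%N by lia.
rewrite /S sum_nat_eq0 => /forallP H0.
exists i; split; first by lia.
move=> j Hj; apply: val_inj => /=.
by move: (H0 j); rewrite Hj /= => /eqP; lia.
Qed.

Lemma l1_ge x y i : ((x i - y i) + (y i - x i) <= l1 x y)%N.
Proof. by rewrite /l1 (bigD1 i) //= leq_addr. Qed.

Lemma l1_upd {x y i} : (forall j, j != i -> y j = x j) ->
  l1 x y = ((x i - y i) + (y i - x i))%N.
Proof.
by move=> H; rewrite /l1 (bigD1 i) //= big1 ?addn0 // => j /H ->; rewrite subnn.
Qed.

Lemma s_upd {x y i} : (forall j, j != i -> y j = x j) -> (s y + x i = s x + y i)%N.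
Proof.
move=> H; rewrite /s (bigD1 i) //= [in X in _ = X](bigD1 i) //=.
have -> : (\sum_(j | j != i) (y j : nat) = \sum_(j | j != i) (x j : nat))%N
  by apply: eq_bigr => j /H ->.
set S := (\sum_(j | j != i) (x j : nat))%N.
lia.
Qed.

Lemma l1_one_s {x y} : l1 x y = 1%N -> s y = (s x).+1 \/ s x = (s y).+1.
Proof.
move=> /l1_one [i [Hi Hj]]; have := s_upd Hj; lia.
Qed.

Lemma inD_coord {x} i : inD x -> (1 <= x i <= n)%N.
Proof. by move/forallP. Qed.

Lemma inD_notBD {x} : inD x -> ~~ inBD x.
Proof.
move=> Hx; apply/negP => /andP [_ /forallP /(_ x)]; rewrite Hx /=.
by rewrite /l1 big1 // => i _; rewrite subnn.
Qed.

Lemma notD_coord {r y i} : inD r -> (forall j, j != i -> y j = r j) -> ~~ inD y ->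
  ~~ (1 <= y i <= n)%N.
Proof.
move=> Hr H; rewrite /inD negb_forall => /existsP [j Hj].
case: (eqVneq j i) => [<- // | /H Hji]; move: Hj; by rewrite Hji (inD_coord j Hr).
Qed.

Lemma JS_down {y i t} : inBD y -> (y i : nat) = 0%N -> (s y <= t)%N -> JS t y.
Proof.
move=> Hb Hy Hs; apply/orP; left; rewrite /KSm Hs andbT /Km Hb eqxx /=.
rewrite -leqn0 -Hy.
have H : forall (r : seq 'I_d), i \in r ->
    (\big[minn/n.+1]_(j <- r) (y j : nat) <= y i)%N.
  elim=> [//|a r IH]; rewrite inE big_cons => /orP [/eqP <-| Hr].
    exact: geq_minl.
  exact: leq_trans (geq_minr _ _) (IH Hr).
exact: (H _ (mem_index_enum i)).
Qed.

Lemma JS_up {y i t} : inBD y -> (y i : nat) = n.+1 -> (s y <= t.+1)%N -> JS t y.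
Proof.
move=> Hb Hy Hs; apply/orP; right; rewrite /KSp Hs andbT /Kp Hb eqxx /=.
rewrite (bigD1 i) //= Hy; apply/eqP/maxn_idPl.
by apply/bigmax_leqP => j _; rewrite -ltnS ltn_ord.
Qed.

Definition setc x (i : 'I_d) (v : nat) : pt n d :=
  [ffun j => if j == i then inord v else x j].

Lemma setc_i x i v : (v <= n.+1)%N -> (setc x i v i : nat) = v.
Proof. by move=> Hv; rewrite /setc ffunE eqxx inordK // ltnS. Qed.

Lemma setc_j x i v j : j != i -> setc x i v j = x j.
Proof. by move=> H; rewrite /setc ffunE (negPf H). Qed.

Lemma pt_eq {x y i} : (forall j, j != i -> y j = x j) -> (y i : nat) = x i -> y = x.
Proof.
move=> H Hi; apply/ffunP => j; case: (eqVneq j i) => [-> |/H //]; exact: val_inj.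
Qed.

Lemma dec_facts {q m} : inD q -> (2 <= q m)%N ->
  [/\ inD (setc q m (q m).-1), (setc q m (q m).-1 m : nat) = (q m).-1,
      (forall j, j != m -> setc q m (q m).-1 j = q j) &
      (s (setc q m (q m).-1)).+1 = s q].
Proof.
move=> Hq H2.
have Hqm := inD_coord m Hq.
have Hm : (setc q m (q m).-1 m : nat) = (q m).-1 by rewrite setc_i //; lia.
have Hj : forall j, j != m -> setc q m (q m).-1 j = q j by move=> j; exact: setc_j.
split => //.
- apply/forallP => j; case: (eqVneq j m) => [->|/Hj ->]; last exact: inD_coord.
  rewrite Hm; lia.
- have := s_upd Hj; rewrite Hm; lia.
Qed.

End Aux.

Local Open Scope ring_scope.

Theorem lemma3p4 (R : realFieldType) (d n t : nat)
  (gam : pt n d -> pt n d -> R) (p : pt n d) (u : pt n d -> R) :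
  (2 <= d)%N -> (1 <= n)%N -> (d <= t <= d * n)%N ->
  (forall x y, edge x y -> 0 < gam x y) ->
  (forall x y, edge x y -> gam x y = gam y x) ->
  L t p ->
  u p = 0 ->
  (forall r, LS t.-1 r -> ~~ Mp t p r ->
     \sum_(q | edge r q) gam r q * (u q - u r) = 0) ->
  (forall b, JS t.-1 b -> u b = 0) ->
  (forall b q, JS t.-1 b -> inD q -> edge b q -> gam b q * (u q - u b) = 0) ->
  forall x, LS t x || JS t.-1 x -> u x = 0.
Proof.
move=> Hd Hn /andP [Hdt Htn] Hgp Hgs Hp Hup Hharm HJ HN.
have Ht2 : (2 <= t)%N by lia.
have tS : t.-1.+1 = t by lia.
have [HpD /eqP Hps] := andP Hp.
have Z1 : forall q i, inD q -> (s q <= t)%N -> (q i : nat) = 1%N -> u q = 0.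
  move=> q i Hq Hs Hqi.
  set b := setc q i 0.
  have Hbi : (b i : nat) = 0%N by rewrite setc_i.
  have Hbj : forall j, j != i -> b j = q j by move=> j; exact: setc_j.
  have Hqj : forall j, j != i -> q j = b j by move=> j /Hbj ->.
  have Hl1 : l1 b q = 1%N by rewrite (l1_upd Hqj) Hbi Hqi.
  have Hl1' : l1 q b = 1%N by rewrite (l1_upd Hbj) Hbi Hqi.
  have HbB : inBD b.
    apply/andP; split; first by apply/existsP; exists q; rewrite Hq Hl1'.
    apply/forallP => z; apply/implyP => Hz.
    have := l1_ge z b i; have := inD_coord i Hz; rewrite Hbi; lia.
  have Hsb : (s b <= t.-1)%N by have := s_upd Hbj; rewrite Hbi Hqi; lia.
  have HbJ : JS t.-1 b by apply: (JS_down HbB Hbi Hsb).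
  have He : edge b q.
    by rewrite /edge Hl1 eqxx HbB Hq orbT /= (negPf (inD_notBD Hq)) ?andbF.
  move: (HN b q HbJ Hq He); rewrite (HJ b HbJ) subr0 => /eqP.
  by rewrite mulf_eq0 (negPf (lt0r_neq0 (Hgp _ _ He))) /= => /eqP.
have NB : forall r y, inD r -> (s r <= t.-1)%N -> edge r y -> ~~ inD y -> u y = 0.
  move=> r y Hr Hs /and4P [/eqP H1 _ Hy _] HyD.
  have HyB : inBD y by move: Hy; rewrite (negPf HyD).
  have [i [Hi Hj]] := l1_one H1.
  have Hs' := s_upd Hj.
  have Hc := notD_coord Hr Hj HyD.
  have Hri := inD_coord i Hr.
  apply: HJ; case: Hi => Hi.
  - apply: (JS_up HyB (i:=i)); lia.
  - apply: (JS_down HyB (i:=i)); lia.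
have Step : forall q m, inD q -> (s q <= t)%N -> (2 <= q m)%N ->
  ~~ Mp t p (setc q m (q m).-1) ->
  u (setc q m (q m).-1) = 0 ->
  (forall y, edge (setc q m (q m).-1) y -> inD y -> y != q -> u y = 0) ->
  u q = 0.
  move=> q m Hq Hs H2 HM Hur Hy.
  have [HrD Hrm Hrj HrS] := dec_facts Hq H2.
  set r := setc q m (q m).-1 in HrD Hrm Hrj HrS HM Hur Hy.
  have Hqj : forall j, j != m -> q j = r j by move=> j /Hrj ->.
  have Hl1 : l1 r q = 1%N by rewrite (l1_upd Hqj) Hrm; lia.
  have He : edge r q.
    by rewrite /edge Hl1 eqxx HrD Hq /= (negPf (inD_notBD Hq)) ?andbF.
  have HLS : LS t.-1 r by rewrite /LS HrD /=; lia.
  have := Hharm r HLS HM.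
  rewrite Hur (bigD1 q) //= big1 ?addr0.
    move=> /eqP; rewrite subr0 mulf_eq0 (negPf (lt0r_neq0 (Hgp _ _ He))) /=.
    by move/eqP.
  move=> y /andP [Hey Hyq].
  case HyD: (inD y); first by rewrite (Hy y Hey HyD Hyq) subr0 mulr0.
  rewrite (NB r y HrD _ Hey (negbT HyD)) ?subr0 ?mulr0 //; lia.
pose i0 : 'I_d := Ordinal (leq_trans (isT : (0 < 2)%N) Hd).
have S1 : forall q, inD q -> (s q < t)%N -> u q = 0.
  suff H : forall N (q : pt n d), (s q * n.+2 + q i0 < N)%N -> inD q -> (s q < t)%N -> u q = 0.
    by move=> q; apply: (H _ q (ltnSn _)).
  elim=> [//|N IH] q Hmu Hq Hs.
  have Hqi := inD_coord i0 Hq.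
  case: (eqVneq (q i0 : nat) 1%N) => [H1|H1]; first exact: (Z1 q i0 Hq (ltnW Hs) H1).
  have H2 : (2 <= q i0)%N by lia.
  have [HrD Hrm Hrj HrS] := dec_facts Hq H2.
  apply: (Step q i0 Hq (ltnW Hs) H2).
  - apply/negP => /andP [/and4P [/eqP Hl _ _ _] _].
    have := l1_one_s Hl; lia.
  - apply: IH => //; last by lia.
    move: Hmu; rewrite -HrS mulSn Hrm; lia.
  - move=> y /and4P [/eqP Hl _ _ _] HyD Hyq.
    have [i [Hi Hj]] := l1_one Hl.
    have Hs' := s_upd Hj.
    have Hyi0 : (y i0 < n.+2)%N by apply: ltn_ord.
    case: Hi => Hi.
    + have Hii : i != i0.
        apply/eqP => Hii; subst i; move/eqP: Hyq; apply.
        apply: (pt_eq (i:=i0)); last by rewrite Hi Hrm; lia.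
        by move=> j Hj'; rewrite Hj // Hrj.
      have Hy0 : y i0 = setc q i0 (q i0).-1 i0 by apply: Hj; rewrite eq_sym.
      apply: IH => //; last by lia.
      have -> : s y = s q by lia.
      rewrite Hy0 Hrm; lia.
    + apply: IH => //; last by lia.
      move: Hmu; have -> : s q = (s y).+2 by lia.
      rewrite !mulSn; lia.
pose i1 : 'I_d := Ordinal (leq_trans (isT : (1 < 2)%N) Hd).
have S2 : forall k, forall q, inD q -> s q = t -> (p k < q k)%N -> u q = 0.
  move=> k.
  pose m := if k == i0 then i1 else i0.
  have Hmk : m != k.
    rewrite /m; case: (k =P i0) => [->|/eqP]; last by rewrite eq_sym.
    by apply/eqP => /(congr1 val).
  suff H : forall N (q : pt n d), ((n.+1 - q k) * n.+2 + q m < N)%N -> inD q -> s q = t ->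
      (p k < q k)%N -> u q = 0.
    by move=> q; apply: (H _ q (ltnSn _)).
  elim=> [//|N IH] q Hmu Hq Hs Hk.
  have Hqm := inD_coord m Hq.
  have Hqk := inD_coord k Hq.
  case: (eqVneq (q m : nat) 1%N) => [H1|H1].
    by apply: (Z1 q m Hq _ H1); lia.
  have H2 : (2 <= q m)%N by lia.
  have [HrD Hrm Hrj HrS] := dec_facts Hq H2.
  have Hrk : setc q m (q m).-1 k = q k by apply: Hrj; rewrite eq_sym.
  apply: (Step q m Hq _ H2); first by lia.
  - apply/negP => /andP [/and4P [/eqP Hl _ _ _] _].
    have [i [Hi Hj]] := l1_one Hl.
    have Hs' := s_upd Hj.
    case: (eqVneq k i) => [Eki|Nki].
    + subst i; rewrite Hrk in Hi Hs'; lia.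
    + move: (Hj k); rewrite Nki Hrk => /(_ isT) Hqk'.
      move: Hk; rewrite Hqk' ltnn //.
  - apply: S1 => //; lia.
  - move=> y /and4P [/eqP Hl _ _ _] HyD Hyq.
    have [i [Hi Hj]] := l1_one Hl.
    have Hs' := s_upd Hj.
    have Hyk := inD_coord k HyD.
    case: Hi => Hi.
    + have Hii : i != m.
        apply/eqP => Hii; subst i; move/eqP: Hyq; apply.
        apply: (pt_eq (i:=m)); last by rewrite Hi Hrm; lia.
        by move=> j Hj'; rewrite Hj // Hrj.
      have Hym : y m = setc q m (q m).-1 m by apply: Hj; rewrite eq_sym.
      have Hyk' : (q k <= y k)%N.
        case: (eqVneq k i) => [Eki|Nki]; first by subst i; rewrite Hi Hrk.
        by rewrite Hj ?Hrk // eq_sym.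
      apply: IH => //; try lia.
      have : ((n.+1 - y k) * n.+2 <= (n.+1 - q k) * n.+2)%N.
        by rewrite leq_mul2r; apply/orP; right; lia.
      rewrite Hym Hrm; lia.
    + apply: S1 => //; lia.
move=> x /orP [/andP [HxD Hxs] | /HJ //].
case: (ltnP (s x) t) => Hxt; first exact: S1.
have Hxt' : s x = t by lia.
case: (eqVneq x p) => [-> // | Hxp].
have [k Hk] : exists k, (p k < x k)%N.
  apply/existsP; apply: contraT; rewrite negb_exists => /forallP Hle.
  have [i Hi] : exists i, x i != p i.
    apply/existsP; apply: contraT; rewrite negb_exists => /forallP He.
    have Exp : x = p by apply/ffunP => j; move: (He j); rewrite negbK => /eqP.
    by rewrite Exp eqxx in Hxp.
  have Hlt : (x i < p i)%N by move: (Hle i) Hi; rewrite -leqNgt ltn_neqAle => -> ->.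
  move: Hps; rewrite /s (bigD1 i) //=; set B := (X in (_ + X)%N) => Hps'.
  move: Hxt'; rewrite /s (bigD1 i) //=; set A := (X in (_ + X)%N) => Hx'.
  have : (A <= B)%N by rewrite /A /B; apply: leq_sum => j _; rewrite leqNgt.
  lia.
exact: (S2 k x HxD Hxt' Hk).
Qed.
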